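(* Let $0<p<1$ and $\alpha>-1$, let $\beta=\frac{1-p}{1+\alpha p}$, and define the sequence $(f_i)_{i\ge1}$ by $$f_1=\frac{p}{1+\beta(1+\alpha)},\qquad f_i=\frac{\beta(i-1+\alpha)}{1+\beta(i+\alpha)}\,f_{i-1}\quad (i>1).$$ Then (I) for all $i\ge1$, $0<f_i<1$ and $f_i>f_{i+1}$; and (II) $\sum_{i=1}^\infty f_i=p$ and $\sum_{i=1}^\infty i f_i = 1$.
   Context: Equivalently, $(f_i)$ is the unique solution of $f_1=p-\beta(1+\alpha)f_1$ and $f_i=\beta\big((i-1+\alpha)f_{i-1}-(i+\alpha)f_i\big)$ for $i>1$. *)

(* Defs.v *)
From Stdlib Require Import Reals Lra Lia.
From Coquelicot Require Import Coquelicot.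
Open Scope R_scope.

Definition beta_A3 (p alpha : R) : R := (1 - p) / (1 + alpha * p).

(* g n = f_(n+1):
   g 0     = p / (1 + beta (1 + alpha))                         (= f_1)
   g (n+1) = beta (i-1+alpha) / (1 + beta (i+alpha)) * g n  with i = n+2. *)
Fixpoint fA3_aux (p alpha : R) (n : nat) : R :=
  let b := beta_A3 p alpha in
  match n with
  | O => p / (1 + b * (1 + alpha))
  | S m => b * (INR (S m + 1) - 1 + alpha) / (1 + b * (INR (S m + 1) + alpha))
           * fA3_aux p alpha m
  end.

(* f i for i >= 1 (f 0 is an unused junk value). *)
Definition fA3 (p alpha : R) (i : nat) : R := fA3_aux p alpha (Nat.pred i).

(* Main.v *)
Require Import Defs.
From Stdlib Require Import Reals Lra Lia.
From Coquelicot Require Import Coquelicot.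
Open Scope R_scope.

Theorem lemmaA3 (p alpha : R) (hp0 : 0 < p) (hp1 : p < 1) (ha : -1 < alpha) :
  (forall i : nat, (1 <= i)%nat ->
     0 < fA3 p alpha i /\ fA3 p alpha i < 1 /\ fA3 p alpha (S i) < fA3 p alpha i) /\
  is_series (fun n : nat => fA3 p alpha (S n)) p /\
  is_series (fun n : nat => INR (S n) * fA3 p alpha (S n)) 1.
Proof.
  assert (Hd : 0 < 1 + alpha * p) by nra.
  set (b := beta_A3 p alpha).
  assert (Hb0 : 0 < b) by (unfold b, beta_A3; apply Rdiv_lt_0_compat; lra).
  assert (Hb1 : b < 1).
  { unfold b, beta_A3. apply (Rmult_lt_reg_r (1 + alpha * p)); [lra|].
    unfold Rdiv; rewrite Rmult_assoc, Rinv_l by lra. nra. }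
  set (g := fA3_aux p alpha).
  assert (G0 : g 0%nat * (1 + b * (1 + alpha)) = p).
  { unfold g; simpl. fold b. field. nra. }
  assert (GS : forall n, g (S n) * (1 + b * (INR n + 2 + alpha)) = b * (INR n + 1 + alpha) * g n).
  { intro n.
    assert (Hr : g (S n) = b * (INR (S n + 1) - 1 + alpha) / (1 + b * (INR (S n + 1) + alpha)) * g n) by reflexivity.
    rewrite Hr.
    replace (INR (S n + 1)) with (INR n + 2) by (rewrite plus_INR, S_INR; simpl; ring).
    assert (0 <= INR n) by apply pos_INR.
    field. nra. }
  assert (Gpos : forall n, 0 < g n).
  { induction n.
    - assert (0 < 1 + b * (1 + alpha)) by nra. 
      apply (Rmult_lt_reg_r (1 + b * (1 + alpha))); lra.
    - assert (0 <= INR n) by apply pos_INR.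
      assert (0 < 1 + b * (INR n + 2 + alpha)) by nra.
      apply (Rmult_lt_reg_r (1 + b * (INR n + 2 + alpha))); [lra|].
      rewrite GS. rewrite Rmult_0_l. apply Rmult_lt_0_compat; [nra|lra]. }
  assert (Gdec : forall n, g (S n) < g n).
  { intro n. assert (0 <= INR n) by apply pos_INR.
    assert (0 < 1 + b * (INR n + 2 + alpha)) by nra.
    specialize (GS n). pose proof (Gpos n). pose proof (Gpos (S n)). nra. }
  assert (G0lt : g 0%nat < 1).
  { assert (0 < b * (1 + alpha)) by nra. specialize (Gpos 0%nat). nra. }
  assert (Glt1 : forall n, g n < 1).
  { induction n; [lra|]. specialize (Gdec n). lra. }
  split.
  { intros i Hi. destruct i as [|n]; [lia|]. unfold fA3; simpl Nat.pred. fold g.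
    repeat split; auto. }
  set (a := fun n => (INR n + 1 + alpha) * g n).
  assert (E0 : g 0%nat = p - b * a 0%nat).
  { unfold a; simpl (INR 0). lra. }
  assert (ES : forall n, g (S n) = b * (a n - a (S n))).
  { intro n. unfold a. rewrite S_INR. specialize (GS n). nra. }
  assert (Apos : forall n, 0 <= a n).
  { intro n. unfold a. assert (0 <= INR n) by apply pos_INR.
    specialize (Gpos n). nra. }
  assert (Adec : forall n, a (S n) <= a n).
  { intro n. specialize (ES n). specialize (Gpos (S n)). nra. }
  set (S_ := fun N => sum_f_R0 g N).
  assert (SE : forall N, S_ N = p - b * a N).
  { induction N; unfold S_ in *; simpl; [lra|]. rewrite IHN, ES. ring. }
  set (T := fun N => sum_f_R0 (fun n => (INR n + 1) * g n) N).
  assert (TE : forall N, T N * (1 - b) = p + b * alpha * S_ N - b * (INR N + 2) * a N).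
  { induction N.
    - unfold T, S_, a; simpl. simpl (INR 0). nra.
    - unfold T, S_ in *; rewrite !tech5; cbv beta.
      rewrite Rmult_plus_distr_r, IHN.
      assert (Hg := ES N). assert (Ha : a (S N) = (INR N + 2 + alpha) * g (S N)).
      { unfold a. rewrite S_INR. ring. }
      rewrite Ha. rewrite S_INR.
      replace (b * (INR N + 2) * a N) with ((INR N + 2) * (b * a N)) by ring.
      replace (b * a N) with (g (S N) + b * a (S N)) by lra.
      rewrite Ha. ring. }
  set (A := fun N => sum_f_R0 a N).
  assert (AE : forall N, A N = T N + alpha * S_ N).
  { induction N; unfold A, T, S_, a in *; simpl; [ring|]. rewrite IHN. ring. }
  assert (Spos : forall N, 0 <= S_ N).
  { induction N; unfold S_ in *; [simpl; pose proof (Gpos 0%nat); lra|].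
    rewrite tech5. pose proof (Gpos (S N)). lra. }
  assert (Sle : forall N, S_ N <= p).
  { intro N. rewrite SE. pose proof (Apos N). nra. }
  assert (Sinc : forall N, S_ N <= S_ (S N)).
  { intro N. unfold S_. rewrite tech5. pose proof (Gpos (S N)). lra. }
  assert (Tinc : forall N, T N <= T (S N)).
  { intro N. unfold T. rewrite tech5. pose proof (Gpos (S N)).
    pose proof (pos_INR (S N)). nra. }
  assert (Tle : forall N, T N <= (p + b * (1 + alpha) * p) / (1 - b)).
  { intro N. apply (Rmult_le_reg_r (1 - b)); [lra|].
    unfold Rdiv; rewrite Rmult_assoc, Rinv_l by lra. rewrite Rmult_1_r.
    rewrite TE. pose proof (Apos N). pose proof (pos_INR N).
    pose proof (Spos N). pose proof (Sle N).
    assert (0 <= b * (INR N + 2) * a N) by (apply Rmult_le_pos; nra).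
    assert (alpha * S_ N <= (1 + alpha) * p) by nra. nra. }
  destruct (ex_finite_lim_seq_incr S_ p Sinc Sle) as [Sl HSl].
  destruct (ex_finite_lim_seq_incr T _ Tinc Tle) as [Tl HTl].
  set (d := fun N => (INR N + 2) * a N).
  assert (dE : forall N, d N = / b * (p + b * alpha * S_ N - (1 - b) * T N)).
  { intro N. unfold d. replace ((1 - b) * T N) with (T N * (1 - b)) by ring. rewrite TE. field. lra. }
  assert (Hd1 : is_lim_seq d (/ b * (p + b * alpha * Sl - (1 - b) * Tl))).
  { eapply is_lim_seq_ext. { intro N; symmetry; apply dE. }
    apply is_lim_seq_mult'; [apply is_lim_seq_const|].
    apply is_lim_seq_minus'.
    - apply is_lim_seq_plus'; [apply is_lim_seq_const|].
      apply is_lim_seq_mult'; [apply is_lim_seq_const|exact HSl].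
    - apply is_lim_seq_mult'; [apply is_lim_seq_const|exact HTl]. }
  set (L := / b * (p + b * alpha * Sl - (1 - b) * Tl)) in Hd1.
  assert (HA : is_lim_seq A (Tl + alpha * Sl)).
  { eapply is_lim_seq_ext. { intro N; symmetry; apply AE. }
    apply is_lim_seq_plus'; [exact HTl|].
    apply is_lim_seq_mult'; [apply is_lim_seq_const|exact HSl]. }
  set (phi := fun n : nat => (n + S n)%nat).
  assert (Hphi : filterlim phi eventually eventually).
  { apply eventually_subseq. intro n; unfold phi; lia. }
  assert (He : is_lim_seq (fun n => 3 * (A (phi n) - A n)) 0).
  { replace 0 with (3 * ((Tl + alpha * Sl) - (Tl + alpha * Sl))) by ring.
    apply is_lim_seq_mult'; [apply is_lim_seq_const|].
    apply is_lim_seq_minus'; [|exact HA].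
    exact (is_lim_seq_subseq A _ phi Hphi HA). }
  assert (Bnd : forall n m, INR m * a (n + m)%nat <= A (n + m)%nat - A n).
  { intros n m. induction m.
    - rewrite Nat.add_0_r. simpl. lra.
    - rewrite Nat.add_succ_r. unfold A in *. rewrite tech5. rewrite S_INR.
      pose proof (Adec (n + m)%nat). pose proof (pos_INR m). nra. }
  assert (Hdphi : is_lim_seq (fun n => d (phi n)) 0).
  { apply is_lim_seq_le_le with (u := fun _ => 0) (w := fun n => 3 * (A (phi n) - A n));
      [|apply is_lim_seq_const|exact He].
    intro n. unfold d, phi. pose proof (Bnd n (S n)) as B.
    pose proof (Apos (n + S n)%nat). rewrite plus_INR in *. rewrite S_INR in *.
    pose proof (pos_INR n). split; nra. }
  assert (L0 : L = 0).
  { pose proof (is_lim_seq_subseq d _ phi Hphi Hd1) as H1.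
    apply is_lim_seq_unique in H1. apply is_lim_seq_unique in Hdphi.
    rewrite H1 in Hdphi. injection Hdphi. auto. }
  rewrite L0 in Hd1.
  assert (Ha0 : is_lim_seq a 0).
  { apply is_lim_seq_le_le with (u := fun _ => 0) (w := d);
      [|apply is_lim_seq_const|exact Hd1].
    intro n. unfold d. pose proof (Apos n). pose proof (pos_INR n). split; nra. }
  assert (HS : is_lim_seq S_ p).
  { eapply is_lim_seq_ext. { intro N; symmetry; apply SE. }
    assert (H0 : is_lim_seq (fun N => p - b * a N) (p - b * 0)).
    { apply is_lim_seq_minus'; [apply is_lim_seq_const|].
      apply is_lim_seq_mult'; [apply is_lim_seq_const|exact Ha0]. }
    rewrite Rmult_0_r, Rminus_0_r in H0. exact H0. }
  assert (HT : is_lim_seq T 1).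
  { apply (is_lim_seq_ext (fun N => (p + b * alpha * S_ N - b * d N) / (1 - b))).
    { intro N. apply (Rmult_eq_reg_r (1 - b)); [|lra].
      rewrite TE. unfold d. field. lra. }
    assert (H0 : is_lim_seq (fun N => (p + b * alpha * S_ N - b * d N) / (1 - b))
                   ((p + b * alpha * p - b * 0) / (1 - b))).
    { apply is_lim_seq_div'; [|apply is_lim_seq_const|lra].
      apply is_lim_seq_minus'.
      + apply is_lim_seq_plus'; [apply is_lim_seq_const|].
        apply is_lim_seq_mult'; [apply is_lim_seq_const|exact HS].
      + apply is_lim_seq_mult'; [apply is_lim_seq_const|exact Hd1]. }
    replace ((p + b * alpha * p - b * 0) / (1 - b)) with 1 in H0; [exact H0|].
    unfold b, beta_A3. field. split; nra. }
  split.
  - assert (H : is_lim_seq (sum_n (fun n => fA3 p alpha (S n))) p); [|exact H].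
    apply (is_lim_seq_ext S_); [|exact HS].
    intro N. rewrite sum_n_Reals. reflexivity.
  - assert (H : is_lim_seq (sum_n (fun n => INR (S n) * fA3 p alpha (S n))) 1); [|exact H].
    apply (is_lim_seq_ext T); [|exact HT].
    intro N. rewrite sum_n_Reals. unfold T. apply sum_eq. intros i _.
    rewrite S_INR. reflexivity.
Qed.
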